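(* Let $n\ge1$ and let $M_1,\dots,M_n$ be two-row channels each having exactly two columns. Then the greatest lower bound $\min_{1\le i\le n}M_i$ exists in $(\mathbb{C}_2,\sqsubseteq)$ (and is a two-row channel with finitely many columns).
   Context: A two-row channel with output set $\mathcal{Y}$ is a $2\times|\mathcal{Y}|$ matrix with nonnegative entries whose rows sum to $1$; $\mathbb{C}_2$ denotes the set of such channels. Refinement: $C\sqsubseteq C'$ iff there is a row-stochastic matrix $W$ with $C\cdot W=C'$. A greatest lower bound of a family $(M_i)$ is a channel $G$ with $G\sqsubseteq M_i$ for all $i$, such that $H\sqsubseteq G$ for every channel $H$ with $H\sqsubseteq M_i$ for all $i$ (unique up to mutual refinement). *)

(* Defs.v *)
From HB Require Import structures.
From mathcomp Require Import all_boot all_order all_algebra.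
From mathcomp Require Export reals.
Set Implicit Arguments. Unset Strict Implicit. Unset Printing Implicit Defensive.
Import Order.TTheory GRing.Theory Num.Theory.
Local Open Scope ring_scope.

Definition row_stochastic (R : realType) (m k : nat) (W : 'M[R]_(m, k)) : Prop :=
  (forall i j, 0 <= W i j) /\ (forall i, \sum_(j < k) W i j = 1).

Definition channel2 (R : realType) (m : nat) (C : 'M[R]_(2, m)) : Prop :=
  row_stochastic C.

Definition refines (R : realType) (m k : nat)
    (C : 'M[R]_(2, m)) (C' : 'M[R]_(2, k)) : Prop :=
  exists W : 'M[R]_(m, k), row_stochastic W /\ C *m W = C'.

Definition is_glb2 (R : realType) (n k : nat)
    (M : 'I_n -> 'M[R]_(2, k)) (g : nat) (G : 'M[R]_(2, g)) : Prop :=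
  channel2 G /\ (forall i, refines G (M i)) /\
  (forall (h : nat) (H : 'M[R]_(2, h)), channel2 H ->
     (forall i, refines H (M i)) -> refines H G).

(* Main.v *)
Require Import Defs.
From mathcomp Require Import all_boot all_order all_algebra reals.
From mathcomp Require Import ring lra.
Set Implicit Arguments. Unset Strict Implicit. Unset Printing Implicit Defensive.
Import Order.TTheory GRing.Theory Num.Theory.
Local Open Scope ring_scope.

Ltac pring := apply: injective_projections; simpl; ring.

Definition cr (R : pzRingType) (p q : R * R) : R := p.1 * q.2 - p.2 * q.1.
Definition sc (R : pzRingType) (a : R) (p : R * R) : R * R := (a * p.1, a * p.2).

Lemma sum_fst (R : pzRingType) (I : Type) (s : seq I) (P : pred I) (F : I -> R * R) :
  (\sum_(i <- s | P i) F i).1 = \sum_(i <- s | P i) (F i).1.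
Proof. by apply: (big_morph fst). Qed.
Lemma sum_snd (R : pzRingType) (I : Type) (s : seq I) (P : pred I) (F : I -> R * R) :
  (\sum_(i <- s | P i) F i).2 = \sum_(i <- s | P i) (F i).2.
Proof. by apply: (big_morph snd). Qed.

Lemma cr_sumr (R : comPzRingType) (I : Type) (s : seq I) (P : pred I) (F : I -> R * R) p :
  cr p (\sum_(i <- s | P i) F i) = \sum_(i <- s | P i) cr p (F i).
Proof.
rewrite /cr sum_fst sum_snd !mulr_sumr -sumrB //.
Qed.
Lemma cr_suml (R : comPzRingType) (I : Type) (s : seq I) (P : pred I) (F : I -> R * R) p :
  cr (\sum_(i <- s | P i) F i) p = \sum_(i <- s | P i) cr (F i) p.
Proof.
rewrite /cr sum_fst sum_snd !mulr_suml -sumrB //.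
Qed.
Lemma crD_r (R : comPzRingType) (p q q' : R * R) : cr p (q + q') = cr p q + cr p q'.
Proof. rewrite /cr /=; ring. Qed.
Lemma crB_r (R : comPzRingType) (p q q' : R * R) : cr p (q - q') = cr p q - cr p q'.
Proof. rewrite /cr /=; ring. Qed.
Lemma crD_l (R : comPzRingType) (p q q' : R * R) : cr (q + q') p = cr q p + cr q' p.
Proof. rewrite /cr /=; ring. Qed.
Lemma crN (R : comPzRingType) (p q : R * R) : cr p q = - cr q p.
Proof. rewrite /cr /=; ring. Qed.
Lemma crpp (R : comPzRingType) (p : R * R) : cr p p = 0.
Proof. rewrite /cr /=; ring. Qed.
Lemma cr_scr (R : comPzRingType) a (p q : R * R) : cr p (sc a q) = a * cr p q.
Proof. rewrite /cr /=; ring. Qed.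
Lemma cr_scl (R : comPzRingType) a (p q : R * R) : cr (sc a p) q = a * cr p q.
Proof. rewrite /cr /=; ring. Qed.

Definition nng (R : numDomainType) (p : R * R) := 0 <= p.1 /\ 0 <= p.2.

Lemma cr_trans (R : realFieldType) (x y z : R * R) :
  nng x -> nng y -> nng z -> 0 < y.1 + y.2 ->
  0 <= cr x y -> 0 <= cr y z -> 0 <= cr x z.
Proof.
case: x => x1 x2; case: y => y1 y2; case: z => z1 z2; rewrite /nng /cr /=.
move=> [hx1 hx2] [hy1 hy2] [hz1 hz2] hy hxy hyz.
have e1 : y1 * (x1 * z2 - x2 * z1) = x1 * (y1 * z2 - y2 * z1) + z1 * (x1 * y2 - x2 * y1) by ring.
have e2 : y2 * (x1 * z2 - x2 * z1) = x2 * (y1 * z2 - y2 * z1) + z2 * (x1 * y2 - x2 * y1) by ring.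
have h1 : 0 <= y1 * (x1 * z2 - x2 * z1) by rewrite e1 addr_ge0 // mulr_ge0.
have h2 : 0 <= y2 * (x1 * z2 - x2 * z1) by rewrite e2 addr_ge0 // mulr_ge0.
have : 0 <= (y1 + y2) * (x1 * z2 - x2 * z1) by rewrite mulrDl addr_ge0.
by rewrite pmulr_rge0.
Qed.

Lemma parallel (R : realFieldType) (a b : R * R) :
  a.1 + a.2 != 0 -> cr a b = 0 -> b = sc ((b.1 + b.2) / (a.1 + a.2)) a.
Proof.
case: a => a1 a2; case: b => b1 b2; rewrite /cr /sc /= => ha hc.
congr pair; apply/eqP; rewrite -subr_eq0; apply/eqP.
- have -> : b1 - (b1 + b2) / (a1 + a2) * a1 = (b1 * a2 - b2 * a1) / (a1 + a2).
    by field.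
  have -> : b1 * a2 - b2 * a1 = - (a1 * b2 - a2 * b1) by ring.
  by rewrite hc oppr0 mul0r.
- have -> : b2 - (b1 + b2) / (a1 + a2) * a2 = (a1 * b2 - a2 * b1) / (a1 + a2).
    by field.
  by rewrite hc mul0r.
Qed.

Definition T (R : realFieldType) (v : nat -> R * R) (j : nat) := \sum_(0 <= i < j) v i.
Definition Sg (R : realFieldType) (g : seq (R * R)) (k : nat) := \sum_(x <- take k g) x.

Lemma T0 (R : realFieldType) (v : nat -> R * R) : T v 0 = 0.
Proof. by rewrite /T big_geq. Qed.
Lemma TS (R : realFieldType) (v : nat -> R * R) j : T v j.+1 = T v j + v j.
Proof. by rewrite /T big_nat_recr. Qed.
Lemma Tsplit (R : realFieldType) (v : nat -> R * R) j p : (j <= p)%N ->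
  T v p = T v j + \sum_(j <= i < p) v i.
Proof. by move=> hjp; rewrite /T (big_cat_nat (leq0n j) hjp). Qed.
Lemma Sgcons (R : realFieldType) (g1 : R * R) g k : Sg (g1 :: g) k.+1 = g1 + Sg g k.
Proof. by rewrite /Sg /= big_cons. Qed.
Lemma Sg_size (R : realFieldType) (g : seq (R * R)) : Sg g (size g) = \sum_(x <- g) x.
Proof. by rewrite /Sg take_size. Qed.

Lemma sc_add (R : realFieldType) a (p q : R * R) : sc a (p + q) = sc a p + sc a q.
Proof. by case: p => ? ?; (try case: q => ? ?); rewrite /sc /=; congr pair; simpl; ring. Qed.
Lemma sc_sub (R : realFieldType) a (p q : R * R) : sc a (p - q) = sc a p - sc a q.
Proof. by case: p => ? ?; (try case: q => ? ?); rewrite /sc /=; congr pair; simpl; ring. Qed.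
Lemma sc0 (R : realFieldType) a : sc a (0 : R * R) = 0.
Proof. by rewrite /sc /= !mulr0. Qed.
Lemma sc_1m (R : realFieldType) a (p : R * R) : sc (1 - a) p = p - sc a p.
Proof. by case: p => ? ?; (try case: q => ? ?); rewrite /sc /=; congr pair; simpl; ring. Qed.
Lemma scA (R : realFieldType) a b (p : R * R) : sc a (sc b p) = sc (a * b) p.
Proof. by case: p => ? ?; (try case: q => ? ?); rewrite /sc /=; congr pair; simpl; ring. Qed.
Lemma sc_sum (R : realFieldType) (I : Type) (s : seq I) (P : pred I) (F : I -> R * R) a :
  sc a (\sum_(i <- s | P i) F i) = \sum_(i <- s | P i) sc a (F i).
Proof. apply: (big_morph (sc a)) => [x y|]; [exact: sc_add | exact: sc0]. Qed.

Lemma plucker (R : realFieldType) (a g p x : R * R) :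
  cr g p * cr a x = cr a p * cr g x + cr g a * cr p x.
Proof. rewrite /cr; ring. Qed.

Lemma sc0l (R : realFieldType) (p : R * R) : sc 0 p = 0.
Proof. by rewrite /sc !mul0r. Qed.
Lemma sc1 (R : realFieldType) (p : R * R) : sc 1 p = p.
Proof. by rewrite /sc !mul1r; case: p. Qed.

Definition wf (R : realFieldType) (p : nat) (f lam : R) (j : nat) : R :=
  if (j < p)%N then lam else if j == p then lam * f else 0.

Lemma Wsum_le (R : realFieldType) (v : nat -> R * R) p f lam j : (j <= p)%N ->
  \sum_(0 <= i < j) sc (wf p f lam i) (v i) = sc lam (T v j).
Proof.
elim: j => [|j IH] hj; first by rewrite big_geq // T0 sc0.
by rewrite big_nat_recr //= IH ?(ltnW hj) // TS sc_add /wf hj.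
Qed.

Lemma Wsum_gt (R : realFieldType) (v : nat -> R * R) p f lam j : (p < j)%N ->
  \sum_(0 <= i < j) sc (wf p f lam i) (v i) = sc lam (T v p + sc f (v p)).
Proof.
elim: j => [|j IH] hj //.
rewrite big_nat_recr //=.
rewrite ltnS leq_eqVlt in hj; case/orP: hj => [/eqP->|hpj].
- by rewrite Wsum_le // /wf ltnn eqxx sc_add scA.
- rewrite IH // /wf ltnNge (ltnW hpj) /= (gtn_eqF hpj).
  by rewrite /sc /= !mul0r addr0.
Qed.

Lemma cr_T_l (R : realFieldType) m (v : nat -> R * R) j :
  (forall i j, (i < j)%N -> (j < m)%N -> 0 <= cr (v i) (v j)) -> (j < m)%N ->
  0 <= cr (T v j) (v j).
Proof.
move=> sv hj; rewrite /T cr_suml big_nat_cond; apply: sumr_ge0 => i /andP[/andP[_ hij] _].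
exact: sv.
Qed.

Lemma cr_T_r (R : realFieldType) m (v : nat -> R * R) j p :
  (forall i j, (i < j)%N -> (j < m)%N -> 0 <= cr (v i) (v j)) -> (p <= m)%N ->
  (j <= p)%N -> 0 <= cr (v j) (T v p - T v j).
Proof.
move=> sv hpm hjp; rewrite (Tsplit v hjp) addrC addKr cr_sumr big_nat_cond.
apply: sumr_ge0 => i /andP[/andP[hji hip] _].
case: (ltngtP j i) hji => // [hji|->] _; last by rewrite crpp.
by apply: sv => //; apply: leq_trans hip hpm.
Qed.


Lemma peelC (R : realFieldType) m (v : nat -> R * R) (g1 : R * R) (g : seq (R * R)) p f lam :
  (forall j, (j < m)%N -> nng (v j)) ->
  (forall i j, (i < j)%N -> (j < m)%N -> 0 <= cr (v i) (v j)) ->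
  nng g1 -> (forall x, x \in g -> nng x) ->
  (forall x, x \in g -> 0 <= cr g1 x) ->
  (forall k j, (k <= (size g).+1)%N -> (j < m)%N -> 0 <= cr (v j) (Sg (g1 :: g) k - T v j)) ->
  (p <= m)%N -> 0 <= f <= 1 -> 0 <= lam <= 1 ->
  g1 = sc lam (T v p + sc f (v p)) ->
  cr (T v p + sc f (v p)) g1 = 0 ->
  (forall j, (j < p)%N -> 0 <= cr (v j) g1 -> 0 < g1.1 + g1.2) ->
  (forall j, (j < p)%N -> cr (v j) g1 < 0 -> (p < m)%N /\ 0 < cr g1 (v p)) ->
  forall k j, (k <= size g)%N -> (j < m)%N ->
  0 <= cr (sc (1 - wf p f lam j) (v j)) (Sg g k - T (fun i => sc (1 - wf p f lam i) (v i)) j).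
Proof.
move=> hv sv hg1 hg sg hC hpm hf hl hg1e hpar hflat hsteep k j hk hj.
have hT'' : T (fun i => sc (1 - wf p f lam i) (v i)) j
    = T v j - \sum_(0 <= i < j) sc (wf p f lam i) (v i).
  by rewrite /T -sumrB; apply: eq_bigr => i _; rewrite sc_1m.
case/andP: hf => hf0 hf1; case/andP: hl => hl0 hl1.
rewrite cr_scl hT''; apply: mulr_ge0.
  rewrite subr_ge0 /wf; case: ifP => _ //; case: ifP => _ //.
  by rewrite -[1]mulr1 ler_pM.
have hC' : forall j, (j < m)%N -> 0 <= cr (v j) (g1 + Sg g k - T v j).
  by move=> j' hj'; rewrite -Sgcons; apply: hC.
have hSg : 0 <= cr g1 (Sg g k).
  rewrite /Sg cr_sumr big_seq; apply: sumr_ge0 => x hx; apply: sg.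
  exact: (mem_take hx).
case: (ltngtP j p) => hjp.
- rewrite Wsum_le ?(ltnW hjp) //.
  case: (lerP 0 (cr (v j) g1)) => hs.
  + have -> : cr (v j) (Sg g k - (T v j - sc lam (T v j)))
        = cr (v j) (Sg g k) + (1 - lam) * cr (T v j) (v j) by rewrite /cr /sc /=; ring.
    apply: addr_ge0; last by apply: mulr_ge0; [rewrite subr_ge0 | exact: cr_T_l sv hj].
    rewrite /Sg cr_sumr big_seq; apply: sumr_ge0 => x hx.
    apply: (@cr_trans _ _ g1) => //; [exact: hv | exact: hg (mem_take hx) | exact: hflat hjp hs
      | exact: sg (mem_take hx)].
  + have [hpm' hD] := hsteep j hjp hs.
    set Ts := T v p + sc f (v p).
    have -> : cr (v j) (Sg g k - (T v j - sc lam (T v j)))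
        = cr (v j) (sc lam Ts + Sg g k - Ts) + (1 - lam) * cr (v j) (Ts - T v j).
      by rewrite /cr /sc /=; ring.
    rewrite -hg1e.
    have h1 : 0 <= cr (v j) (Ts - T v j).
      have -> : Ts - T v j = (T v p - T v j) + sc f (v p) by rewrite /Ts; pring.
      rewrite crD_r cr_scr; apply: addr_ge0; first exact: (cr_T_r sv hpm (ltnW hjp)).
      by apply: mulr_ge0 => //; apply: sv.
    have hx1 : 0 <= cr g1 (g1 + Sg g k - Ts).
      have -> : cr g1 (g1 + Sg g k - Ts) = cr g1 (Sg g k) + cr Ts g1 by rewrite /cr /=; ring.
      by rewrite hpar addr0.
    have hx2 : 0 <= cr (v p) (g1 + Sg g k - Ts).
      have -> : cr (v p) (g1 + Sg g k - Ts) = cr (v p) (g1 + Sg g k - T v p)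
        by rewrite /Ts /cr /sc /=; ring.
      exact: hC'.
    have hpl := plucker (v j) g1 (v p) (g1 + Sg g k - Ts).
    have h2 : 0 <= cr (v j) (g1 + Sg g k - Ts).
      have : 0 <= cr g1 (v p) * cr (v j) (g1 + Sg g k - Ts).
        rewrite hpl; apply: addr_ge0; apply: mulr_ge0 => //.
        * exact: sv.
        * by rewrite crN oppr_ge0 ltW.
      by rewrite pmulr_rge0.
    apply: addr_ge0 => //; apply: mulr_ge0 => //. by rewrite subr_ge0.
- rewrite Wsum_gt // -hg1e.
  have -> : Sg g k - (T v j - g1) = g1 + Sg g k - T v j by pring.
  exact: hC'.
- rewrite hjp Wsum_le //.
  have -> : cr (v p) (Sg g k - (T v p - sc lam (T v p)))
      = cr (v p) (sc lam (T v p + sc f (v p)) + Sg g k - T v p) by rewrite /cr /sc /=; ring.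
  by rewrite -hg1e; apply: hC'; rewrite -hjp.
Qed.

Lemma nng_sum (R : realFieldType) (I : Type) (s : seq I) (P : pred I) (F : I -> R * R) :
  (forall i, P i -> nng (F i)) -> nng (\sum_(i <- s | P i) F i).
Proof.
move=> h; rewrite /nng sum_fst sum_snd; split; apply: sumr_ge0 => i /h [] //.
Qed.

Lemma nng_T (R : realFieldType) m (v : nat -> R * R) j : (j <= m)%N ->
  (forall j, (j < m)%N -> nng (v j)) -> nng (T v j).
Proof.
move=> hjm hv; rewrite /T big_nat_cond; apply: nng_sum => i /andP[/andP[_ hi] _].
by apply: hv; apply: leq_trans hi hjm.
Qed.

Lemma nng_pos (R : realFieldType) (x : R * R) : nng x -> ~~ (0 < x.1 + x.2) -> x = 0.
Proof.
case: x => a b [/= ha hb]; rewrite -leNgt => h.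
have ea : a = 0 by lra.
have eb : b = 0 by lra.
by rewrite ea eb.
Qed.

Lemma peel_exists (R : realFieldType) m (v : nat -> R * R) (g1 : R * R) (g : seq (R * R)) :
  (forall j, (j < m)%N -> nng (v j)) ->
  (forall i j, (i < j)%N -> (j < m)%N -> 0 <= cr (v i) (v j)) ->
  nng g1 -> (forall x, x \in g -> nng x) ->
  (forall x, x \in g -> 0 <= cr g1 x) ->
  (forall k j, (k <= (size g).+1)%N -> (j < m)%N -> 0 <= cr (v j) (Sg (g1 :: g) k - T v j)) ->
  T v m = g1 + \sum_(x <- g) x ->
  exists p f lam,
  [/\ (p <= m)%N, 0 <= f <= 1, 0 <= lam <= 1 & (p = m -> f = 0)] /\
  [/\ g1 = sc lam (T v p + sc f (v p)), cr (T v p + sc f (v p)) g1 = 0,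
  (forall j, (j < p)%N -> 0 <= cr (v j) g1 -> 0 < g1.1 + g1.2) &
  (forall j, (j < p)%N -> cr (v j) g1 < 0 -> (p < m)%N /\ 0 < cr g1 (v p))].
Proof.
move=> hv sv hg1 hg sg hC hsum.
have hgV : 0 <= cr g1 (T v m).
  rewrite hsum crD_r crpp add0r cr_sumr big_seq; apply: sumr_ge0 => x hx; exact: sg.
have nngsum : nng (\sum_(x <- g) x) by rewrite big_seq; apply: nng_sum => x hx; exact: hg.
case: (boolP (0 < g1.1 + g1.2)) => hpos; last first.
  exists 0%N, 0, 0; split; split => //; rewrite ?lexx ?ler01 //.
  - by rewrite (nng_pos hg1 hpos) /sc /= !mul0r.
  - by rewrite (nng_pos hg1 hpos) /cr /= !mulr0 subr0.
case: (boolP [forall j : 'I_m, 0 <= cr (v j) g1]) => hall.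
  have hall' : forall j, (j < m)%N -> 0 <= cr (v j) g1.
    by move=> j hj; have := forallP hall (Ordinal hj).
  have hVg : 0 <= cr (T v m) g1.
    rewrite /T cr_suml big_nat_cond; apply: sumr_ge0 => i /andP[/andP[_ hi] _]; exact: hall'.
  have hcr0 : cr (T v m) g1 = 0 by move: hgV; rewrite crN; lra.
  have hVpos : 0 < (T v m).1 + (T v m).2.
    rewrite hsum /=; case: nngsum => h1 h2; lra.
  exists m, 0, ((g1.1 + g1.2) / ((T v m).1 + (T v m).2)); split; split => //.
  - by rewrite lexx ler01.
  - apply/andP; split; first by apply: divr_ge0; [case: hg1 => ? ?; lra | lra].
    rewrite ler_pdivrMr // mul1r hsum /=; case: nngsum => h1 h2; lra.
  - have -> : T v m + sc 0 (v m) = T v m by rewrite /sc !mul0r addr0.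
    by apply: parallel; [rewrite lt0r_neq0 | exact: hcr0].
  - by rewrite /sc !mul0r addr0.
  - move=> j hj hneg; have := hall' j hj; lra.
move: hall; rewrite negb_forall => /existsP hex.
have hex' : exists j, (j < m)%N && (cr (v j) g1 < 0).
  by case: hex => j hj; exists (val j); rewrite ltn_ord /= ltNge.
pose j0 := ex_minn hex'.
have [hj0m hj0neg] : (j0 < m)%N /\ cr (v j0) g1 < 0.
  by rewrite /j0; case: ex_minnP => j /andP[].
have hbef : forall i, (i < j0)%N -> 0 <= cr (v i) g1.
  move=> i hi; rewrite leNgt; apply/negP => hn.
  have : (j0 <= i)%N.
    rewrite /j0; case: ex_minnP => j _ hmin; apply: hmin.
    by rewrite hn andbT (ltn_trans hi).
  by rewrite leqNgt hi.
have hvj0 : 0 < (v j0).1 + (v j0).2.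
  rewrite ltNge; apply/negP => hn.
  have e : v j0 = 0 by apply: (nng_pos (hv _ hj0m)); rewrite -leNgt.
  by move: hj0neg; rewrite e /cr /= !mul0r subrr ltxx.
have haft : forall i, (j0 <= i)%N -> (i < m)%N -> cr (v i) g1 <= 0.
  move=> i h1 h2; case: (ltngtP j0 i) h1 => // [hlt|<-] _; last exact: ltW.
  rewrite crN oppr_le0; apply: (@cr_trans _ _ (v j0)) => //; try exact: hv.
  + by rewrite crN oppr_ge0 ltW.
  + exact: sv.
have hphi0 : 0 <= cr (T v j0) g1.
  rewrite /T cr_suml big_nat_cond; apply: sumr_ge0 => i /andP[/andP[_ hi] _]; exact: hbef.
have hVg : cr (T v m) g1 <= 0 by move: hgV; rewrite crN; lra.
have hexp : exists i, [&& (j0 <= i)%N, (i < m)%N & cr (T v i.+1) g1 <= 0].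
  have hm0 : (0 < m)%N by apply: leq_ltn_trans hj0m.
  by exists m.-1; rewrite -[(j0 <= _)%N]ltnS prednK // hj0m leqnn hVg.
pose p := ex_minn hexp.
have [hj0p hpm hp1] : [/\ (j0 <= p)%N, (p < m)%N & cr (T v p.+1) g1 <= 0].
  by rewrite /p; case: ex_minnP => i /and3P[].
have hpmin : forall i, (j0 <= i)%N -> (i < m)%N -> cr (T v i.+1) g1 <= 0 -> (p <= i)%N.
  move=> i h1 h2 h3; rewrite /p; case: ex_minnP => q _ hmin; apply: hmin.
  by rewrite h1 h2 h3.
have [hphip hvp] : 0 <= cr (T v p) g1 /\ cr (v p) g1 < 0.
  case: (ltngtP j0 p) hj0p => // [hlt|<-] _; last first.
    by split => //; case: (p) hj0neg.
  have hp1' : 0 < cr (T v p) g1.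
    have hp0 : (0 < p)%N by apply: leq_ltn_trans hlt.
    rewrite ltNge; apply/negP => hle.
    have hq1 : (j0 <= p.-1)%N by rewrite -ltnS prednK.
    have hq2 : (p.-1 < m)%N by apply: leq_ltn_trans (leq_pred p) hpm.
    have := hpmin _ hq1 hq2; rewrite prednK // => /(_ hle).
    by rewrite leqNgt ltn_predL hp0.
  split; first exact: ltW.
  by move: hp1; rewrite TS crD_l; lra.
have hCp : 0 <= cr (v p) (g1 - T v p).
  have := hC 1%N p (ltn0Sn _) hpm; by rewrite /Sg /= take0 big_cons big_nil addr0.
have hcpT : cr (v p) (T v p) < 0 by move: hCp; rewrite crB_r; lra.
have hTp := nng_T (ltnW hpm) hv.
have hTpos : 0 < (T v p).1 + (T v p).2.
  rewrite ltNge; apply/negP => hn.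
  have e : T v p = 0 by apply: (nng_pos hTp); rewrite -leNgt.
  by move: hcpT; rewrite e /cr /= !mulr0 subrr ltxx.
set c := cr (v p) g1.
pose f := cr (T v p) g1 / (- c).
have hf0 : 0 <= f by apply: divr_ge0; [exact: hphip | rewrite oppr_ge0; exact: ltW].
have hf1 : f <= 1.
  by rewrite /f ler_pdivrMr ?oppr_gt0 // mul1r; move: hp1; rewrite TS crD_l -/c; lra.
set Ts := T v p + sc f (v p).
have hTs0 : cr Ts g1 = 0.
  rewrite /Ts crD_l cr_scl /f -/c; field; rewrite ?oppr_eq0; exact: ltr0_neq0.
have hTspos : 0 < Ts.1 + Ts.2.
  have [h1 h2] := hv _ hpm.
  rewrite /Ts /sc /=; have : 0 <= f * (v p).1 by apply: mulr_ge0.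
  have : 0 <= f * (v p).2 by apply: mulr_ge0.
  lra.
pose lam := (g1.1 + g1.2) / (Ts.1 + Ts.2).
have hg1e : g1 = sc lam Ts by apply: parallel; [rewrite lt0r_neq0 | exact: hTs0].
have hlam0 : 0 <= lam by apply: divr_ge0; [case: hg1 => ? ?; lra | lra].
have hlam1 : lam <= 1.
  have e : cr (v p) (g1 - T v p) = (lam - 1) * cr (v p) (T v p).
    rewrite {1}hg1e /Ts /cr /sc /=; ring.
  move: hCp; rewrite e => h.
  rewrite leNgt; apply/negP => hl.
  have : 0 < (lam - 1) * - cr (v p) (T v p) by apply: mulr_gt0; lra.
  lra.
exists p, f, lam; split; split => //. all: try (apply/andP; split; done).
- exact: ltnW.
- by move=> e; move: hpm; rewrite e ltnn.
- move=> j _ hneg; split => //; rewrite crN; lra.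
Qed.

Lemma wf_bounds (R : realFieldType) p (f lam : R) j :
  0 <= f <= 1 -> 0 <= lam <= 1 -> 0 <= wf p f lam j <= 1.
Proof.
move=> /andP[f0 f1] /andP[l0 l1]; rewrite /wf.
case: ifP => _; first by apply/andP.
case: ifP => _; last by rewrite lexx ler01.
apply/andP; split; first exact: mulr_ge0.
by rewrite -[1]mulr1 ler_pM.
Qed.

Lemma transport (R : realFieldType) (g : seq (R * R)) : forall m (v : nat -> R * R),
  (0 < size g)%N ->
  (forall j, (j < m)%N -> nng (v j)) ->
  (forall i j, (i < j)%N -> (j < m)%N -> 0 <= cr (v i) (v j)) ->
  (forall x, x \in g -> nng x) ->
  pairwise (fun x y => 0 <= cr x y) g ->
  (forall k j, (k <= size g)%N -> (j < m)%N -> 0 <= cr (v j) (Sg g k - T v j)) ->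
  T v m = \sum_(x <- g) x ->
  exists W : nat -> nat -> R,
   [/\ (forall j l, (j < m)%N -> (l < size g)%N -> 0 <= W j l),
       (forall j, (j < m)%N -> \sum_(0 <= l < size g) W j l = 1) &
       (forall l, (l < size g)%N -> \sum_(0 <= j < m) sc (W j l) (v j) = nth 0 g l)].
Proof.
elim: g => [|g1 g IH] m v //= _ hv sv hg sg hC hsum.
have hg1 : nng g1 by apply: hg; rewrite inE eqxx.
have hg' : forall x, x \in g -> nng x by move=> x hx; apply: hg; rewrite inE hx orbT.
move: sg => /andP[/allP sg1 sg].
have sg1' : forall x, x \in g -> 0 <= cr g1 x by move=> x /sg1.
rewrite big_cons in hsum.
case: g IH hg hg' sg sg1 sg1' hC hsum => [|g2 g] IH hg hg' sg sg1 sg1' hC hsum.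
  exists (fun _ _ => 1); split.
  - by move=> j l _ _; rewrite ler01.
  - by move=> j _; rewrite /= big_nat1.
  - move=> l; rewrite ltnS leqn0 => /eqP -> /=.
    rewrite big_nil addr0 in hsum; rewrite -hsum /T; apply: eq_bigr => j _.
    by rewrite /sc !mul1r; case: (v j).
set g' := g2 :: g.
have [p [f [lam [[hpm hf hl hpf] [hg1e hpar hflat hsteep]]]]] :=
  peel_exists hv sv hg1 hg' sg1' hC hsum.
set w := wf p f lam.
pose v'' := fun j => sc (1 - w j) (v j).
have hw : forall j, 0 <= w j <= 1 by move=> j; exact: wf_bounds.
have hW1 : \sum_(0 <= j < m) sc (w j) (v j) = g1.
  rewrite /w; case: (ltngtP p m) hpm => // [hlt|e] _; first by rewrite Wsum_gt.
  by rewrite e Wsum_le // hg1e hpf // sc0l addr0 e.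
have [W'' [hW0 hWr hWc]] : exists W : nat -> nat -> R,
   [/\ (forall j l, (j < m)%N -> (l < size g')%N -> 0 <= W j l),
       (forall j, (j < m)%N -> \sum_(0 <= l < size g') W j l = 1) &
       (forall l, (l < size g')%N -> \sum_(0 <= j < m) sc (W j l) (v'' j) = nth 0 g' l)].
  apply: IH => //.
  - move=> j hj; have [h1 h2] := hv j hj; have /andP[w0 w1] := hw j.
    by split; rewrite /v'' /sc /=; apply: mulr_ge0; rewrite ?subr_ge0.
  - move=> i j hij hj; rewrite /v'' cr_scl cr_scr.
    have /andP[_ wi] := hw i; have /andP[_ wj] := hw j.
    by apply: mulr_ge0; [rewrite subr_ge0|apply: mulr_ge0; [rewrite subr_ge0|exact: sv]].
  - move=> k j hk hj; exact: (peelC hv sv hg1 hg' sg1' hC hpm hf hl hg1e hpar hflat hsteep).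
  - have -> : T v'' m = T v m - \sum_(0 <= j < m) sc (w j) (v j).
      by rewrite /T -sumrB; apply: eq_bigr => j _; rewrite /v'' sc_1m.
    by rewrite hW1 hsum addrC addKr.
exists (fun j l => if l is l'.+1 then (1 - w j) * W'' j l' else w j); split.
- move=> j [|l] hj hl0 /=; first by case/andP: (hw j).
  apply: mulr_ge0; first by case/andP: (hw j) => _; rewrite subr_ge0.
  exact: hW0.
- move=> j hj; rewrite big_nat_recl //= -mulr_sumr hWr //; ring.
- move=> [|l] hl0 /=; first exact: hW1.
  rewrite -(hWc l hl0); apply: eq_bigr => j _; rewrite /v'' scA mulrC //.
Qed.


Definition sorted2 (R : realFieldType) (ch : seq (R * R)) :=
  pairwise (fun x y => 0 <= cr x y) ch.

Lemma sorted2_nth (R : realFieldType) (ch : seq (R * R)) i j :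
  sorted2 ch -> (i < j)%N -> (j < size ch)%N -> 0 <= cr (nth 0 ch i) (nth 0 ch j).
Proof.
move=> /(pairwiseP 0) h hij hj; apply: h => //; rewrite inE //.
exact: ltn_trans hij hj.
Qed.

Lemma sorted2_nth_le (R : realFieldType) (ch : seq (R * R)) i j :
  sorted2 ch -> (i <= j)%N -> (j < size ch)%N -> 0 <= cr (nth 0 ch i) (nth 0 ch j).
Proof.
move=> h; rewrite leq_eqVlt => /orP[/eqP->|hij] hj; first by rewrite crpp.
exact: sorted2_nth.
Qed.

Lemma Sg_nth (R : realFieldType) (ch : seq (R * R)) j : (j <= size ch)%N ->
  Sg ch j = \sum_(0 <= i < j) nth 0 ch i.
Proof.
move=> hj; rewrite /Sg (big_nth 0) size_takel //.
by apply: eq_big_nat => i /andP[_ hi]; rewrite nth_take.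
Qed.

Lemma T_Sg (R : realFieldType) (ch : seq (R * R)) j : (j <= size ch)%N ->
  T (fun i => nth 0 ch i) j = Sg ch j.
Proof. by move=> hj; rewrite Sg_nth. Qed.

Lemma Sg_drop (R : realFieldType) (ch : seq (R * R)) j : (j <= size ch)%N ->
  \sum_(x <- ch) x - Sg ch j = \sum_(j <= i < size ch) nth 0 ch i.
Proof.
move=> hj; rewrite -Sg_size !Sg_nth // (big_cat_nat (leq0n j) hj) /=.
by rewrite addrAC subrr add0r.
Qed.

Lemma chain_lo (R : realFieldType) (ch : seq (R * R)) j : sorted2 ch -> (j < size ch)%N ->
  0 <= cr (Sg ch j) (nth 0 ch j).
Proof.
move=> hs hj; rewrite Sg_nth; last exact: ltnW.
rewrite cr_suml big_nat_cond.
apply: sumr_ge0 => i /andP[/andP[_ hi] _]; exact: sorted2_nth.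
Qed.

Lemma chain_hi (R : realFieldType) (ch : seq (R * R)) j : sorted2 ch -> (j < size ch)%N ->
  0 <= cr (nth 0 ch j) (\sum_(x <- ch) x - Sg ch j).
Proof.
move=> hs hj; rewrite Sg_drop; last exact: ltnW.
rewrite cr_sumr big_nat_cond.
apply: sumr_ge0 => i /andP[/andP[hji hi] _]; exact: sorted2_nth_le.
Qed.

Lemma chain_above (R : realFieldType) (ch : seq (R * R)) A Bp P alpha gamma d :
  \sum_(x <- ch) x = Bp - A -> sorted2 ch -> 0 <= alpha <= 1 -> 0 <= gamma ->
  (forall e, e \in ch -> 0 <= cr e d) ->
  P = A + sc alpha (Bp - A) + sc gamma d ->
  forall j, (j < size ch)%N -> 0 <= cr (nth 0 ch j) (P - (A + Sg ch j)).
Proof.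
move=> hsum hs /andP[ha0 ha1] hg0 hd -> j hj.
have e : cr (nth 0 ch j) (A + sc alpha (Bp - A) + sc gamma d - (A + Sg ch j))
  = (1 - alpha) * cr (Sg ch j) (nth 0 ch j)
    + alpha * cr (nth 0 ch j) (\sum_(x <- ch) x - Sg ch j)
    + gamma * cr (nth 0 ch j) d.
  by rewrite hsum /cr /sc /=; ring.
rewrite e; apply: addr_ge0; first apply: addr_ge0.
- by apply: mulr_ge0; [rewrite subr_ge0 | exact: chain_lo].
- by apply: mulr_ge0; [ | exact: chain_hi].
- by apply: mulr_ge0 => //; apply: hd; rewrite mem_nth.
Qed.

Lemma cone_nng (R : realFieldType) (u b y : R * R) :
  nng u -> nng b -> 0 < cr u b -> 0 <= cr y b -> 0 <= cr u y -> nng y.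
Proof.
move=> [u1 u2] [b1 b2] hub hyb huy.
have e1 : y.1 * cr u b = cr y b * u.1 + cr u y * b.1 by rewrite /cr; ring.
have e2 : y.2 * cr u b = cr y b * u.2 + cr u y * b.2 by rewrite /cr; ring.
split.
- have : 0 <= y.1 * cr u b by rewrite e1; apply: addr_ge0; apply: mulr_ge0.
  by rewrite pmulr_lge0.
- have : 0 <= y.2 * cr u b by rewrite e2; apply: addr_ge0; apply: mulr_ge0.
  by rewrite pmulr_lge0.
Qed.

Lemma argmin_seq (R : realFieldType) (T0 : eqType) (s : seq T0) (F : T0 -> R) :
  s != [::] -> exists2 c, c \in s & forall x, x \in s -> F c <= F x.
Proof.
elim: s => // a s IH _; case: (eqVneq s [::]) => [->|hs].
  by exists a; rewrite ?inE ?eqxx // => x; rewrite inE => /eqP ->.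
have [c hc hmin] := IH hs.
case: (lerP (F a) (F c)) => h.
- exists a; first by rewrite inE eqxx.
  move=> x; rewrite inE => /orP[/eqP->//|hx]; exact: le_trans h (hmin x hx).
- exists c; first by rewrite inE hc orbT.
  move=> x; rewrite inE => /orP[/eqP->|hx]; [exact: ltW | exact: hmin].
Qed.


Lemma nng_nz (R : realFieldType) (x : R * R) : nng x -> x != 0 -> 0 < x.1 + x.2.
Proof.
move=> hx hnz; case: (boolP (0 < x.1 + x.2)) => // h.
by move: hnz; rewrite (nng_pos hx h) eqxx.
Qed.

Lemma Sg_S (R : realFieldType) (s : seq (R * R)) k : (k < size s)%N ->
  Sg s k.+1 = Sg s k + nth 0 s k.
Proof. by move=> hk; rewrite !Sg_nth ?(ltnW hk) // big_nat_recr. Qed.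

Lemma Sg0 (R : realFieldType) (s : seq (R * R)) : Sg s 0 = 0.
Proof. by rewrite /Sg take0 big_nil. Qed.

Lemma flat_last (R : realFieldType) (ch : seq (R * R)) A C b (S1 : seq (R * R)) :
  \sum_(x <- ch) x = C - A -> C != A -> sorted2 ch -> (forall e, e \in ch -> nng e /\ e != 0) ->
  nng b ->
  (forall k, (k <= size ch)%N -> A + Sg ch k = A \/ A + Sg ch k = C \/ A + Sg ch k \in S1) ->
  0 <= cr b (A - C) -> (forall P, P \in S1 -> 0 <= cr b (P - C)) ->
  forall e, e \in ch -> 0 <= cr e b.
Proof.
move=> hsum hCA hs he hb hV hA hS1.
have ht : (0 < size ch)%N.
  case: ch hsum {hs he hV} => //=; rewrite big_nil => /eqP; rewrite eq_sym subr_eq0.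
  by rewrite (negbTE hCA).
set t := size ch.
have htt : (t.-1 < t)%N by rewrite ltn_predL.
set el := nth 0 ch t.-1.
have hSt : Sg ch t = C - A by rewrite /t Sg_size.
have hel : el = C - (A + Sg ch t.-1).
  have e := Sg_S htt; rewrite prednK // hSt in e.
  have -> : C = A + (Sg ch t.-1 + el) by rewrite -e; pring.
  pring.
have hel_b : 0 <= cr el b.
  have -> : cr el b = cr b (A + Sg ch t.-1 - C) by rewrite hel /cr /=; ring.
  case: (hV t.-1 (ltnW htt)) => [->|[->|hin]] //; first by rewrite subrr /cr /= !mulr0 subrr.
  exact: hS1.
have helin : el \in ch by rewrite /el mem_nth.
have [heln helnz] := he _ helin.
move=> e /(nthP 0) [i hi <-].
case: (ltngtP i t.-1) => [hlt|hgt|->] //.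
- apply: (@cr_trans _ _ el) => //; first by case: (he _ (mem_nth 0 hi)).
  + exact: nng_nz.
  + exact: sorted2_nth.
- by move: hi; rewrite -(prednK ht) ltnS leqNgt hgt.
Qed.

Lemma steep_first (R : realFieldType) (ch : seq (R * R)) C B b (S2 : seq (R * R)) :
  \sum_(x <- ch) x = B - C -> B != C -> sorted2 ch -> (forall e, e \in ch -> nng e /\ e != 0) ->
  nng b ->
  (forall k, (k <= size ch)%N -> C + Sg ch k = C \/ C + Sg ch k = B \/ C + Sg ch k \in S2) ->
  0 <= cr b (B - C) -> (forall P, P \in S2 -> 0 <= cr b (P - C)) ->
  forall e, e \in ch -> 0 <= cr b e.
Proof.
move=> hsum hBC hs he hb hV hB hS2.
have ht : (0 < size ch)%N.
  case: ch hsum {hs he hV} => //=; rewrite big_nil => /eqP; rewrite eq_sym subr_eq0.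
  by rewrite (negbTE hBC).
set ef := nth 0 ch 0.
have hef : ef = C + Sg ch 1 - C by rewrite Sg_S // Sg0 /ef; pring.
have hef_b : 0 <= cr b ef.
  rewrite hef; case: (hV 1%N ht) => [->|[->|hin]] //; first by rewrite subrr /cr /= !mulr0 subrr.
  exact: hS2.
have hefin : ef \in ch by rewrite /ef mem_nth.
have [hefn hefnz] := he _ hefin.
move=> e /(nthP 0) [i hi <-].
case: i hi => [|i] hi //.
apply: (@cr_trans _ _ ef) => //; first by case: (he _ (mem_nth 0 hi)).
- exact: nng_nz.
- exact: sorted2_nth.
Qed.

Definition le2 (R : realFieldType) (p q : R * R) := nng (q - p).

Lemma Sg_catl (R : realFieldType) (s1 s2 : seq (R * R)) k : (k <= size s1)%N ->
  Sg (s1 ++ s2) k = Sg s1 k.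
Proof.
move=> hk; rewrite /Sg take_cat; case: ltnP => // hk'.
have e : k = size s1 by apply/eqP; rewrite eqn_leq hk hk'.
by rewrite e subnn take0 cats0 take_size.
Qed.

Lemma Sg_catr (R : realFieldType) (s1 s2 : seq (R * R)) k :
  Sg (s1 ++ s2) (size s1 + k) = \sum_(x <- s1) x + Sg s2 k.
Proof.
rewrite /Sg take_cat ltnNge leq_addr /= big_cat /=; congr (_ + _).
by rewrite addKn.
Qed.

Lemma QH_nil (R : realFieldType) (A B : R * R) :
  le2 A B -> B != A ->
  exists ch : seq (R * R),
  [/\ \sum_(x <- ch) x = B - A,
      (forall e, e \in ch -> nng e /\ e != 0),
      sorted2 ch,
      (forall k, (k <= size ch)%N -> A + Sg ch k = A \/ A + Sg ch k = B \/ A + Sg ch k \in [::]) &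
      (forall P, P \in [::] -> forall j, (j < size ch)%N -> 0 <= cr (nth 0 ch j) (P - (A + Sg ch j)))].
Proof.
move=> hAB hBA; exists [:: B - A]; split.
- by rewrite big_seq1.
- by move=> e; rewrite inE => /eqP ->; split => //; rewrite subr_eq0.
- by rewrite /sorted2 /=.
- move=> [|[|k]] // _; first by left; rewrite Sg0 addr0.
  by right; left; rewrite /Sg /= big_seq1; pring.
- by [].
Qed.


Lemma filter_lt (T0 : eqType) (a : pred T0) (s : seq T0) x :
  x \in s -> ~~ a x -> (size (filter a s) < size s)%N.
Proof.
move=> hx hn; rewrite size_filter -(count_predC a s) -{1}[count a s]addn0 ltn_add2l.
by rewrite -has_count; apply/hasP; exists x.
Qed.

Lemma QH (R : realFieldType) n : forall (S : seq (R * R)) A B, (size S <= n)%N ->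
  le2 A B -> B != A ->
  (forall P, P \in S -> [/\ le2 A P, le2 P B & cr (B - A) (P - A) < 0]) ->
  exists ch : seq (R * R),
  [/\ \sum_(x <- ch) x = B - A,
      (forall e, e \in ch -> nng e /\ e != 0),
      sorted2 ch,
      (forall k, (k <= size ch)%N -> A + Sg ch k = A \/ A + Sg ch k = B \/ A + Sg ch k \in S) &
      (forall P, P \in S -> forall j, (j < size ch)%N -> 0 <= cr (nth 0 ch j) (P - (A + Sg ch j)))].
Proof.
elim: n => [|n IH] S A B hS hAB hBA hP.
  by case: S hS hP => // _ _; apply: QH_nil.
case: (eqVneq S [::]) hP => [->|hne] hP; first exact: QH_nil.
set b := B - A.
have [C hCS hmin] := argmin_seq (fun P => cr b (P - A)) hne.
have [hAC hCB hCneg] := hP C hCS.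
have hb : nng b := hAB.
have hbnz : b != 0 by rewrite /b subr_eq0.
have hbpos := nng_nz hb hbnz.
have hCA : C != A.
  by apply/negP => /eqP e; move: hCneg; rewrite e subrr /cr /= !mulr0 subrr ltxx.
have hBC : B != C.
  apply/negP => /eqP e; move: hCneg; rewrite -e -/b crpp ltxx //.
pose S1 := [seq P <- S | cr (C - A) (P - A) < 0].
pose S2 := [seq P <- S | cr (B - C) (P - C) < 0].
have hS1 : (size S1 <= n)%N.
  rewrite -ltnS; apply: leq_trans hS; apply: (filter_lt hCS).
  by rewrite /= crpp ltxx.
have hS2 : (size S2 <= n)%N.
  rewrite -ltnS; apply: leq_trans hS; apply: (filter_lt hCS).
  by rewrite /= subrr /cr /= !mulr0 subrr ltxx.
have hminP : forall P, P \in S -> 0 <= cr b (P - C).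
  move=> P hPS; have := hmin P hPS.
  have -> : cr b (P - C) = cr b (P - A) - cr b (C - A) by rewrite /cr /=; ring.
  by rewrite subr_ge0.
have hDu : 0 < cr (C - A) b by rewrite crN oppr_gt0.
have hbBC : 0 < cr b (B - C).
  have -> : cr b (B - C) = - cr b (C - A) by rewrite /b /cr /=; ring.
  by rewrite oppr_gt0.
have [ch1 [h1sum h1e h1s h1V h1P]] : exists ch : seq (R * R),
  [/\ \sum_(x <- ch) x = C - A,
      (forall e, e \in ch -> nng e /\ e != 0),
      sorted2 ch,
      (forall k, (k <= size ch)%N -> A + Sg ch k = A \/ A + Sg ch k = C \/ A + Sg ch k \in S1) &
      (forall P, P \in S1 -> forall j, (j < size ch)%N -> 0 <= cr (nth 0 ch j) (P - (A + Sg ch j)))].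
  apply: IH => // P; rewrite mem_filter => /andP[hPu hPS].
  have [hAP hPB hPneg] := hP P hPS; split => //.
  rewrite /le2; apply: (cone_nng hAC hb hDu).
  - have -> : cr (C - P) b = cr b (P - C) by rewrite /cr /=; ring.
    exact: hminP.
  - have -> : cr (C - A) (C - P) = - cr (C - A) (P - A) by rewrite /cr /=; ring.
    by rewrite oppr_ge0 ltW.
have [ch2 [h2sum h2e h2s h2V h2P]] : exists ch : seq (R * R),
  [/\ \sum_(x <- ch) x = B - C,
      (forall e, e \in ch -> nng e /\ e != 0),
      sorted2 ch,
      (forall k, (k <= size ch)%N -> C + Sg ch k = C \/ C + Sg ch k = B \/ C + Sg ch k \in S2) &
      (forall P, P \in S2 -> forall j, (j < size ch)%N -> 0 <= cr (nth 0 ch j) (P - (C + Sg ch j)))].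
  apply: IH => // P; rewrite mem_filter => /andP[hPu hPS].
  have [hAP hPB hPneg] := hP P hPS; split => //.
  rewrite /le2; apply: (cone_nng hb hCB hbBC).
  - by rewrite crN oppr_ge0 ltW.
  - exact: hminP.
have hflat : forall e, e \in ch1 -> 0 <= cr e b.
  apply: (flat_last h1sum hCA h1s h1e hb h1V).
  - have -> : cr b (A - C) = - cr b (C - A) by rewrite /cr /=; ring.
    by rewrite oppr_ge0 ltW.
  - by move=> P; rewrite mem_filter => /andP[_ hPS]; exact: hminP.
have hsteep : forall e, e \in ch2 -> 0 <= cr b e.
  apply: (steep_first h2sum hBC h2s h2e hb h2V); first exact: ltW.
  by move=> P; rewrite mem_filter => /andP[_ hPS]; exact: hminP.
exists (ch1 ++ ch2); split.
- by rewrite big_cat h1sum h2sum; pring.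
- by move=> e; rewrite mem_cat => /orP[]; [apply: h1e | apply: h2e].
- rewrite /sorted2 pairwise_cat; move: h1s h2s; rewrite /sorted2 => -> ->; rewrite !andbT; apply/allrelP => x y hx hy.
  have [hxn _] := h1e x hx; have [hyn _] := h2e y hy.
  apply: (@cr_trans _ _ b) => //; [exact: hflat | exact: hsteep].
- move=> k; rewrite size_cat => hk.
  case: (leqP k (size ch1)) => hk1.
    rewrite Sg_catl //; case: (h1V k hk1) => [->|[->|hin]]; first by left.
      by right; right.
    by right; right; move: hin; rewrite mem_filter => /andP[].
  have -> : k = (size ch1 + (k - size ch1))%N by rewrite subnKC // ltnW.
  rewrite Sg_catr h1sum.
  have -> : A + (C - A + Sg ch2 (k - size ch1)) = C + Sg ch2 (k - size ch1) by pring.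
  have hk2 : (k - size ch1 <= size ch2)%N by rewrite leq_subLR.
  case: (h2V _ hk2) => [->|[->|hin]]; first by right; right.
    by right; left.
  by right; right; move: hin; rewrite mem_filter => /andP[].
- move=> P hPS j; rewrite size_cat => hj.
  have [hAP hPB hPneg] := hP P hPS.
  rewrite nth_cat; case: (ltnP j (size ch1)) => hj1.
    rewrite Sg_catl ?(ltnW hj1) //.
    case: (boolP (cr (C - A) (P - A) < 0)) => hPu.
      by apply: h1P => //; rewrite mem_filter hPu.
    rewrite -leNgt in hPu.
    pose D := cr (C - A) b.
    refine (@chain_above _ ch1 A C P (cr (P - A) b / D) (cr (C - A) (P - A) / D) b
      h1sum h1s _ _ hflat _ j hj1).
    + apply/andP; split; first by apply: divr_ge0; [rewrite crN oppr_ge0 ltW | exact: ltW].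
      rewrite ler_pdivrMr // mul1r /D crN [cr (C - A) b]crN lerN2; exact: hmin.
    + by apply: divr_ge0 => //; exact: ltW.
    + have hD : D != 0 by rewrite lt0r_neq0.
      apply: injective_projections; rewrite /= /D /b /cr /=; field; exact: hD.
  have hj2 : (j - size ch1 < size ch2)%N by rewrite ltn_subLR.
  have -> : j = (size ch1 + (j - size ch1))%N by rewrite subnKC.
  rewrite Sg_catr h1sum addKn.
  have -> : A + (C - A + Sg ch2 (j - size ch1)) = C + Sg ch2 (j - size ch1) by pring.
  case: (boolP (cr (B - C) (P - C) < 0)) => hPu.
    by apply: h2P => //; rewrite mem_filter hPu.
  rewrite -leNgt in hPu.
  pose D := cr b (B - C).
  refine (@chain_above _ ch2 C B P (cr b (P - C) / D) (cr (B - C) (P - C) / D) (- b)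
    h2sum h2s _ _ _ _ _ hj2).
  + apply/andP; split; first by apply: divr_ge0; [exact: hminP | exact: ltW].
    rewrite ler_pdivrMr // mul1r /D.
    have -> : cr b (B - C) = cr b (P - C) - cr b (P - A) by rewrite /b /cr /=; ring.
    have := hPneg; rewrite -/b; lra.
  + by apply: divr_ge0 => //; exact: ltW.
  + move=> e he; have := hsteep e he; rewrite /cr /=; lra.
  + have hD : D != 0 by rewrite lt0r_neq0.
    apply: injective_projections; rewrite /= /D /b /cr /=; field; exact: hD.
Qed.

Definition key (R : realFieldType) (p : R * R) := p.2 / (p.1 + p.2).

Lemma key_cr (R : realFieldType) (p q : R * R) :
  nng p -> nng q -> key p <= key q -> 0 <= cr p q.
Proof.
move=> hp hq; case: (boolP (0 < p.1 + p.2)) => hps; last first.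
  by rewrite (nng_pos hp hps) /cr /= !mul0r subrr.
case: (boolP (0 < q.1 + q.2)) => hqs; last first.
  by rewrite (nng_pos hq hqs) /cr /= !mulr0 subrr.
rewrite /key ler_pdivrMr // mulrAC ler_pdivlMr // /cr => h.
nra.
Qed.

Lemma Zc (R : realFieldType) m (v : nat -> R * R) (w : nat -> R) P :
  (forall i j, (i < j)%N -> (j < m)%N -> 0 <= cr (v i) (v j)) ->
  (forall j, (j < m)%N -> 0 <= w j <= 1) ->
  P = \sum_(0 <= j < m) sc (w j) (v j) ->
  forall j, (j < m)%N -> 0 <= cr (v j) (P - T v j).
Proof.
move=> sv hw -> j hj.
rewrite (big_cat_nat (leq0n j) (ltnW hj)) /=.
have -> : \sum_(0 <= i < j) sc (w i) (v i) + \sum_(j <= i < m) sc (w i) (v i) - T v j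
  = \sum_(0 <= i < j) (sc (w i) (v i) - v i) + \sum_(j <= i < m) sc (w i) (v i).
  by rewrite /T sumrB addrAC.
rewrite crD_r !cr_sumr; apply: addr_ge0.
- rewrite big_nat_cond; apply: sumr_ge0 => i /andP[/andP[_ hi] _].
  have -> : cr (v j) (sc (w i) (v i) - v i) = (1 - w i) * cr (v i) (v j) by rewrite /cr /sc /=; ring.
  have /andP[_ h1] := hw i (ltn_trans hi hj).
  by apply: mulr_ge0; [rewrite subr_ge0 | exact: sv].
- rewrite big_nat_cond; apply: sumr_ge0 => i /andP[/andP[hji hi] _].
  rewrite cr_scr; have /andP[h0 _] := hw i hi.
  apply: mulr_ge0 => //; case: (ltngtP j i) hji => // [hlt|<-] _; last by rewrite crpp.
  exact: sv.
Qed.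


Definition col (R : realType) k (A : 'M[R]_(2, k)) (j : 'I_k) : R * R := (A ord0 j, A ord_max j).
Definition sel (R : realType) (i : 'I_2) (p : R * R) : R := if i == ord0 then p.1 else p.2.

Lemma I2_cases (i : 'I_2) : i = ord0 \/ i = ord_max.
Proof. by case: i => [[|[|?]] hi] //; [left|right]; apply: val_inj. Qed.

Lemma col_sel (R : realType) k (A : 'M[R]_(2, k)) i j : A i j = sel i (col A j).
Proof. by case: (I2_cases i) => ->. Qed.

Lemma sel_sum (R : realType) (I : Type) (s : seq I) (P : pred I) (F : I -> R * R) i :
  sel i (\sum_(x <- s | P x) F x) = \sum_(x <- s | P x) sel i (F x).
Proof. by rewrite /sel; case: ifP => _; [rewrite sum_fst | rewrite sum_snd]. Qed.

Lemma sel_sc (R : realType) i a (p : R * R) : sel i (sc a p) = a * sel i p.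
Proof. by rewrite /sel; case: ifP. Qed.

Lemma sel_ext (R : realType) (p q : R * R) : (forall i, sel i p = sel i q) -> p = q.
Proof.
move=> h; apply: injective_projections; [by have := h ord0; rewrite /sel eqxx | by have := h ord_max; rewrite /sel].
Qed.

Lemma mul_col (R : realType) k l (A : 'M[R]_(2, k)) (W : 'M[R]_(k, l)) r c :
  (A *m W) r c = sel r (\sum_(j < k) sc (W j c) (col A j)).
Proof.
rewrite mxE sel_sum; apply: eq_bigr => j _; by rewrite sel_sc col_sel mulrC.
Qed.

Lemma chan_sum (R : realType) k (A : 'M[R]_(2, k)) :
  channel2 A -> \sum_(j < k) col A j = (1, 1).
Proof.
move=> [_ hs]; apply: sel_ext => i; rewrite sel_sum.
have -> : sel i (1, 1) = 1 by rewrite /sel; case: (i == ord0).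
by rewrite -(hs i); apply: eq_bigr => j _; rewrite -col_sel.
Qed.

Lemma chan_nng (R : realType) k (A : 'M[R]_(2, k)) j : channel2 A -> nng (col A j).
Proof. by move=> [h _]; split; apply: h. Qed.

Lemma rs_le1 (R : realType) k l (W : 'M[R]_(k, l)) i j : row_stochastic W -> W i j <= 1.
Proof.
move=> [h0 h1]; rewrite -(h1 i) (bigD1 j) //= lerDl.
by apply: sumr_ge0 => ? _; apply: h0.
Qed.

Lemma chan2_le (R : realType) (A : 'M[R]_(2, 2)) j : channel2 A -> le2 (col A j) (1, 1).
Proof.
move=> hA; have h0 := fun i => @rs_le1 _ _ _ A i j hA; rewrite /le2 /nng /col /=.
by split; rewrite subr_ge0; apply: h0.
Qed.

Definition chmx (R : realType) (ch : seq (R * R)) : 'M[R]_(2, size ch) :=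
  \matrix_(i, j) sel i (nth 0 ch j).

Lemma col_chmx (R : realType) (ch : seq (R * R)) j : col (chmx ch) j = nth 0 ch j.
Proof. by rewrite /col !mxE /sel /=; case: (nth 0 ch j). Qed.

Lemma sum_ord2 (V : nmodType) (F : 'I_2 -> V) : \sum_(c < 2) F c = F ord0 + F ord_max.
Proof. rewrite big_ord_recr big_ord1; congr (F _ + _); exact: val_inj. Qed.

Lemma I2_other (c0 c1 : 'I_2) : c0 != c1 -> forall c, c != c0 -> c = c1.
Proof.
move=> h c hc; apply/val_inj; move: h hc.
by case: c0 => [[|[|?]] ?]; case: c1 => [[|[|?]] ?]; case: c => [[|[|?]] ?].
Qed.

Lemma I2_pair (c0 c1 : 'I_2) : c0 != c1 ->
  (c0 = ord0 /\ c1 = ord_max) \/ (c0 = ord_max /\ c1 = ord0).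
Proof.
case: c0 => [[|[|?]] h0] //; case: c1 => [[|[|?]] h1] //= _.
- by left; split; apply: val_inj.
- by right; split; apply: val_inj.
Qed.

Lemma upper_aux (R : realType) (ch : seq (R * R)) (Mi : 'M[R]_(2, 2)) (c0 c1 : 'I_2) :
  channel2 Mi -> c0 != c1 -> 0 <= cr (col Mi c0) (col Mi c1) ->
  \sum_(x <- ch) x = (1, 1) -> (forall e, e \in ch -> nng e /\ e != 0) -> sorted2 ch ->
  (forall c, cr (1, 1) (col Mi c) < 0 ->
     forall j, (j < size ch)%N -> 0 <= cr (nth 0 ch j) (col Mi c - Sg ch j)) ->
  refines (chmx ch) Mi.
Proof.
move=> hM hc01 hLU hsum he hs hab.
set L := col Mi c0; set U := col Mi c1.
have hLUV : L + U = (1, 1).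
  rewrite -(chan_sum hM) sum_ord2 /L /U.
  by case: (I2_pair hc01) => [[-> ->]|[-> ->]] //; rewrite addrC.
have hLn : nng L := chan_nng c0 hM.
have hUn : nng U := chan_nng c1 hM.
have [W' [hW0 hWr hWc]] : exists W : nat -> nat -> R,
   [/\ (forall j l, (j < size ch)%N -> (l < 2)%N -> 0 <= W j l),
       (forall j, (j < size ch)%N -> \sum_(0 <= l < 2) W j l = 1) &
       (forall l, (l < 2)%N -> \sum_(0 <= j < size ch) sc (W j l) (nth 0 ch j) = nth 0 [:: L; U] l)].
  apply: (@transport R [:: L; U] (size ch) (fun j => nth 0 ch j)) => //.
  - by move=> j hj; case: (he _ (mem_nth 0 hj)).
  - by move=> i j hij hj; apply: sorted2_nth.
  - by move=> x; rewrite !inE => /orP[] /eqP ->.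
  - by rewrite /= hLU.
  - move=> k j hk hj; rewrite T_Sg; last exact: ltnW.
    case: k hk => [|[|[|k]]] // _.
    + have -> : cr (nth 0 ch j) (Sg [:: L; U] 0 - Sg ch j) = cr (Sg ch j) (nth 0 ch j).
        by rewrite Sg0 /cr /=; ring.
      exact: chain_lo.
    + have -> : Sg [:: L; U] 1 = L by rewrite /Sg /= big_seq1.
      case: (ltrP (cr (1, 1) L) 0) => hVL; first exact: hab.
      have hVL0 : cr (1, 1) L = 0.
        have : 0 <= cr L (1, 1) by rewrite -hLUV crD_r crpp add0r.
        by move: hVL; rewrite [cr L _]crN; lra.
      have h2 : (1:R) + 1 != 0 by rewrite lt0r_neq0 //; lra.
      have hLt := parallel (a := (1, 1)) (b := L) h2 hVL0.
      have hle := chan2_le c0 hM; rewrite -/L /le2 /nng /= in hle.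
      have := @chain_above R ch 0 (1, 1) L ((L.1 + L.2) / (1 + 1)) 0 0.
      rewrite subr0 add0r => /(_ hsum hs) H.
      rewrite -[Sg ch j]add0r; apply: H => //.
      * apply/andP; split; first by apply: divr_ge0; case: hLn => ? ?; lra.
        case: hle => ? ?; rewrite ler_pdivrMr; [rewrite mul1r /L /col /=; lra | lra].
      * by move=> e _; rewrite /cr /= !mulr0 subrr.
      * by rewrite {1}hLt /sc /= !mul0r addr0.
    + have -> : Sg [:: L; U] 2 = \sum_(x <- ch) x by rewrite /Sg /= big_cons big_seq1 hsum.
      exact: chain_hi.
  - by rewrite T_Sg // Sg_size hsum big_cons big_seq1.
pose W : 'M[R]_(size ch, 2) := \matrix_(j, c) W' j (if c == c0 then 0%N else 1%N).
exists W; split; first split.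
- by move=> j c; rewrite mxE; apply: hW0 => //; case: ifP.
- move=> j; rewrite sum_ord2 !mxE.
  have := hWr j (ltn_ord j); rewrite big_nat_recr // big_nat1 => <-.
  by case: (I2_pair hc01) => [[-> _]|[-> _]] //=; rewrite addrC.
- apply/matrixP => r c; rewrite mul_col [RHS]col_sel; congr (sel r _).
  have hl : ((if c == c0 then 0 else 1) < 2)%N by case: ifP.
  rewrite -[RHS](_ : nth 0 [:: L; U] (if c == c0 then 0%N else 1%N) = col Mi c).
    rewrite -(hWc _ hl) big_mkord; apply: eq_bigr => j _; by rewrite mxE col_chmx.
  case: (eqVneq c c0) => [->|hne] //=.
  by rewrite (I2_other hc01 hne).
Qed.

Lemma upper_dir (R : realType) (ch : seq (R * R)) (Mi : 'M[R]_(2, 2)) :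
  channel2 Mi ->
  \sum_(x <- ch) x = (1, 1) -> (forall e, e \in ch -> nng e /\ e != 0) -> sorted2 ch ->
  (forall c, cr (1, 1) (col Mi c) < 0 ->
     forall j, (j < size ch)%N -> 0 <= cr (nth 0 ch j) (col Mi c - Sg ch j)) ->
  refines (chmx ch) Mi.
Proof.
move=> hM hsum he hs hab.
case: (lerP 0 (cr (col Mi ord0) (col Mi ord_max))) => h.
- by apply: (@upper_aux _ _ _ ord0 ord_max).
- apply: (@upper_aux _ _ _ ord_max ord0) => //; rewrite crN; lra.
Qed.

Lemma reindex (R : realType) h (i0 : 'I_h) (s : seq 'I_h) (F : 'I_h -> R * R) :
  perm_eq s (enum 'I_h) ->
  \sum_(0 <= j < h) F (nth i0 s j) = \sum_(i < h) F i.
Proof.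
move=> hp; have hsz : size s = h by rewrite (perm_size hp) size_enum_ord.
rewrite -{1}hsz -(big_nth i0 predT F) (perm_big _ hp) /=.
by rewrite big_enum.
Qed.

Lemma lower_dir (R : realType) (ch : seq (R * R)) h (Hm : 'M[R]_(2, h)) :
  channel2 Hm ->
  \sum_(x <- ch) x = (1, 1) -> (forall e, e \in ch -> nng e /\ e != 0) -> sorted2 ch ->
  (forall k, (k <= size ch)%N -> Sg ch k = 0 \/ Sg ch k = (1, 1) \/
     exists w : 'I_h -> R, (forall i, 0 <= w i <= 1) /\
        Sg ch k = \sum_(i < h) sc (w i) (col Hm i)) ->
  refines Hm (chmx ch).
Proof.
move=> hH hsum he hs hV.
have hpos : (0 < h)%N.
  case: h Hm hH {hV} => // Hm hH; have := chan_sum hH; rewrite big_ord0 => /(congr1 fst) /= e.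
  by move: (@ltr01 R); rewrite -e ltxx.
pose i0 := Ordinal hpos.
pose kk := fun a : 'I_h => key (col Hm a).
pose s := sort (fun a b : 'I_h => kk a <= kk b) (enum 'I_h).
have hperm : perm_eq s (enum 'I_h) by rewrite perm_sort.
have hsz : size s = h by rewrite size_sort size_enum_ord.
have hsorted : sorted (fun a b : 'I_h => kk a <= kk b) s.
  by apply: sort_sorted => a b; apply: le_total.
pose v := fun j => col Hm (nth i0 s j).
have hvn : forall j, (j < h)%N -> nng (v j) by move=> j _; apply: chan_nng.
have sv : forall i j, (i < j)%N -> (j < h)%N -> 0 <= cr (v i) (v j).
  move=> i j hij hj; apply: key_cr; try exact: chan_nng.
  have htr : transitive (fun a b : 'I_h => kk a <= kk b) by move=> a b c; apply: le_trans.
  have := sorted_ltn_nth htr i0 hsorted; move=> /(_ i j); rewrite !inE hsz; apply => //.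
  exact: ltn_trans hij hj.
have hVsum : T v h = (1, 1) by rewrite /T reindex // chan_sum.
have hchne : (0 < size ch)%N.
  case: ch hsum {he hs hV} => //; rewrite big_nil => /(congr1 fst) /= e.
  by move: (@ltr01 R); rewrite e ltxx.
have [W' [hW0 hWr hWc]] : exists W : nat -> nat -> R,
   [/\ (forall j l, (j < h)%N -> (l < size ch)%N -> 0 <= W j l),
       (forall j, (j < h)%N -> \sum_(0 <= l < size ch) W j l = 1) &
       (forall l, (l < size ch)%N -> \sum_(0 <= j < h) sc (W j l) (v j) = nth 0 ch l)].
  apply: (@transport R ch h v) => //.
  - by move=> x /he [].
  - move=> k j hk hj.
    case: (hV k hk) => [->|[->|[w [hw ->]]]].
    + apply: (@Zc _ h v (fun _ => 0)) => //; first by move=> _ _; rewrite lexx ler01.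
      by rewrite big1 // => i _; rewrite sc0l.
    + apply: (@Zc _ h v (fun _ => 1)) => //; first by move=> _ _; rewrite lexx ler01.
      by rewrite -hVsum /T; apply: eq_bigr => i _; rewrite sc1.
    + apply: (@Zc _ h v (fun j => w (nth i0 s j))) => //.
      by rewrite /v (reindex i0 (fun i => sc (w i) (col Hm i))).
  - by rewrite hVsum hsum.
pose W : 'M[R]_(h, size ch) := \matrix_(i, l) W' (index i s) l.
have hidx : forall i : 'I_h, (index i s < h)%N.
  by move=> i; have := index_mem i s; rewrite hsz mem_sort mem_enum => ->.
exists W; split; first split.
- by move=> i l; rewrite mxE; apply: hW0.
- move=> i; rewrite -(hWr _ (hidx i)) big_mkord; apply: eq_bigr => l _; by rewrite mxE.
- apply/matrixP => r l; rewrite mul_col mxE; congr (sel r _).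
  rewrite -(hWc _ (ltn_ord l)) -(reindex i0 _ hperm); apply: eq_big_nat => j /andP[_ hj].
  have hu : uniq s by rewrite sort_uniq enum_uniq.
  by rewrite mxE index_uniq // hsz.
Qed.

Theorem mainTheorem12 (R : realType) (n : nat) (hn : (1 <= n)%N)
    (M : 'I_n -> 'M[R]_(2, 2)) (hM : forall i, channel2 (M i)) :
  exists (g : nat) (G : 'M[R]_(2, g)), is_glb2 M G.
Proof.
pose V : R * R := (1, 1).
pose X := [seq col (M i) c | i <- enum 'I_n, c <- enum 'I_2].
pose S := [seq P <- X | cr V P < 0].
have hXP : forall P, P \in X -> exists i c, P = col (M i) c.
  by move=> P /allpairsP [[i c] [_ _ ->]]; exists i, c.
have hXin : forall i c, col (M i) c \in X.
  by move=> i c; apply: allpairs_f; rewrite mem_enum.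
have hV0 : V != 0.
  by apply/negP => /eqP /(congr1 fst) /= /eqP; rewrite oner_eq0.
have [ch [hsum he hs hvert habove]] : exists ch : seq (R * R),
  [/\ \sum_(x <- ch) x = V - 0,
      (forall e, e \in ch -> nng e /\ e != 0),
      sorted2 ch,
      (forall k, (k <= size ch)%N -> 0 + Sg ch k = 0 \/ 0 + Sg ch k = V \/ 0 + Sg ch k \in S) &
      (forall P, P \in S -> forall j, (j < size ch)%N -> 0 <= cr (nth 0 ch j) (P - (0 + Sg ch j)))].
  apply: (@QH R (size S) S 0 V (leqnn _)) => //.
  - by rewrite /le2 subr0 /nng /= ler01.
  - move=> P; rewrite mem_filter => /andP[hneg hPX]; have [i [c eP]] := hXP P hPX; subst P.
    split; [by rewrite /le2 subr0; apply: (chan_nng c (hM i)) | exact: (chan2_le c (hM i)) | by rewrite !subr0].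
rewrite subr0 in hsum.
exists (size ch), (chmx ch); split; last split.
- split.
  + move=> i j; rewrite mxE; have [[h1 h2] _] := he _ (mem_nth 0 (ltn_ord j)).
    by rewrite /sel; case: ifP.
  + move=> i; rewrite -[1](_ : sel i V = 1); last by rewrite /sel; case: (i == ord0).
    rewrite -hsum sel_sum (big_nth 0) big_mkord; apply: eq_bigr => j _; by rewrite mxE.
- move=> i; apply: (upper_dir (hM i) hsum he hs) => c hc j hj.
  have := habove (col (M i) c) _ j hj; rewrite add0r; apply.
  by rewrite mem_filter hc hXin.
- move=> h H hH hlb; apply: lower_dir => // k hk.
  have := hvert k hk; rewrite !add0r => -[->|[->|hin]]; [by left | by right; left | right; right].
  move: hin; rewrite mem_filter => /andP[_ /hXP [i [c ->]]].
  have [W [hW hHW]] := hlb i.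
  exists (fun i' => W i' c); split.
  + move=> i'; apply/andP; split; [by case: hW | exact: rs_le1].
  + apply: sel_ext => r; by rewrite -col_sel -hHW mul_col.
Qed.
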